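(* Let $T$ be a Boolean algebra (with order $\le$, meet $\land$, join $\lor$ and complement $\neg$), and let $(a,g)$ and $(a',g')$ be contracts over $T$. Let $\mathcal{C}_c=(a_c,g_c)$ be their composition, given by $$a_c=(a\land a')\lor(a\land\neg g)\lor(a'\land\neg g'),\qquad g_c=(g\lor\neg a)\land(g'\lor\neg a').$$ Suppose that $a''\in T$ satisfies $a''\land g\land a\le a'\land g\land a$ and that $g''\in T$ satisfies $g\land g'\le g''$. Then the contract $(a\land a'',\,g'')$ is a relaxation of $\mathcal{C}_c$, i.e. $\mathcal{C}_c\le (a\land a'',g'')$.
   Context: A contract over a Boolean algebra $T$ (the ''term algebra'') is a pair $(a,g)$ of elements of $T$, called assumptions and guarantees. Contracts are ordered by refinement: for contracts $\mathcal{C}=(a,g)$ and $\mathcal{C}'=(a',g')$, $\mathcal{C}\le\mathcal{C}'$ (read ''$\mathcal{C}$ refines $\mathcal{C}'$'', or ''$\mathcal{C}'$ is a relaxation of $\mathcal{C}$'') holds iff $a'\le a$ and $g\lor\neg a\le g'\lor\neg a'$. *)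

(* Defs.v *)
(* A Boolean algebra is a complemented distributive lattice
   with top and bottom: MathComp's ctbDistrLatticeType. *)
From mathcomp Require Import all_boot all_order.
Set Implicit Arguments. Unset Strict Implicit. Unset Printing Implicit Defensive.
Import Order.Theory.
Local Open Scope order_scope.

(* A contract over T: pair (assumptions, guarantees). *)
Definition contract (d : Order.disp_t) (T : ctbDistrLatticeType d) : Type := (T * T)%type.

Definition refines (d : Order.disp_t) (T : ctbDistrLatticeType d)
  (C C' : contract T) : Prop :=
  (C'.1 <= C.1) /\ (C.2 `|` ~` C.1 <= C'.2 `|` ~` C'.1).

Definition compose (d : Order.disp_t) (T : ctbDistrLatticeType d)
  (C C' : contract T) : contract T :=
  let: (a, g) := C in let: (a', g') := C' in
  ((a `&` a') `|` (a `&` ~` g) `|` (a' `&` ~` g'),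
   (g `|` ~` a) `&` (g' `|` ~` a')).

(* Main.v *)
Require Import Defs.
From mathcomp Require Import all_boot all_order.
Import Order.Theory.
Local Open Scope order_scope.

Section H.
Context (d : Order.disp_t) (T : ctbDistrLatticeType d).
Implicit Types x y z : T.

Lemma split_le x y z : x `&` z <= y -> x `&` ~` z <= y -> x <= y.
Proof.
move=> h1 h2; by rewrite -[x]meetx1 -(joinxC z) meetUr leUx h1 h2.
Qed.

Lemma mp_le x y : (y `|` ~` x) `&` x <= y.
Proof. by rewrite meetUl meetCx joinx0 leIl. Qed.
End H.
Arguments mp_le {d T}.

Theorem theorem1 (d : Order.disp_t) (T : ctbDistrLatticeType d)
  (a g a' g' a'' g'' : T)
  (ha : a'' `&` g `&` a <= a' `&` g `&` a)
  (hg : g `&` g' <= g'') :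
  refines (compose (a, g) (a', g')) (a `&` a'', g'').
Proof.
rewrite /refines /=; split.
  apply: (@split_le _ _ _ _ (g)).
    apply: le_trans (_ : a `&` a' <= _); last by rewrite -joinA leUl.
    have h : a `&` a'' `&` g <= a' `&` g `&` a.
      by apply: le_trans ha; rewrite [a `&` a'']meetC -meetA [a `&` g]meetC meetA.
    rewrite lexI; apply/andP; split.
      by apply: le_trans h _; rewrite leIr.
    by apply: le_trans h _; rewrite -meetA leIl.
  apply: le_trans (_ : a `&` ~` g <= _); last first.
    by rewrite -joinA (joinC (a `&` ~` g)) joinA leUr.
  by rewrite -meetA; apply: leI2 => //; exact: leIr.
set gc := (_ `&` _).
have hc : ~` (a `&` a' `|` a `&` ~` g `|` a' `&` ~` g') <= gc.
  rewrite !complU !complI !complK /gc lexI; apply/andP; split.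
    by rewrite (joinC g) -meetA meetCA leIl.
  by rewrite (joinC g') leIr.
apply: le_trans (_ : gc <= _); first by rewrite leUx lexx hc.
apply: (@split_le _ _ _ _ (a `&` a'')); last by rewrite leIxr ?leUr.
have h1 : gc `&` (a `&` a'') <= g.
  apply: (le_trans _ (mp_le a g)); rewrite /gc -meetA.
  by apply: leI2 => //; rewrite leIxr // leIl.
have h2 : gc `&` (a `&` a'') <= a'.
  apply: (le_trans _ (_ : a' `&` g `&` a <= _)); last by rewrite -meetA leIl.
  apply: (le_trans _ ha); rewrite !lexI h1 /= andbT.
  apply/andP; split; first by rewrite leIxr // leIr.
  by rewrite leIxr // leIl.
apply: (le_trans _ (leUl g'' _)); apply: (le_trans _ hg); rewrite lexI h1 /=.
apply: (le_trans _ (mp_le a' g')).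
by rewrite lexI h2 /= leIxl // leIr.
Qed.
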